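(* Let $p$ be a prime. Let $H$ and $K$ be conjugacy $p$-separable groups, let $A\leqslant H$ and $B\leqslant K$ be central subgroups, and let $\varphi:A\to B$ be an isomorphism. Suppose the subgroups $A$ and $B$, as well as every subgroup of finite $p$-power index in $A$ and every subgroup of finite $p$-power index in $B$, are $p$-separable in $H$ and in $K$ respectively. Then for every normal subgroup $M\leqslant H$ of finite $p$-power index in $H$ and every normal subgroup $N\leqslant K$ of finite $p$-power index in $K$ there exist normal subgroups $R\leqslant H$ and $S\leqslant K$ of finite $p$-power index in $H$ and $K$ respectively such that $R\leqslant M$, $S\leqslant N$, and $(A\cap R)\varphi=B\cap S$.
   Context: A group $G$ is conjugacy $p$-separable if whenever $a,b\in G$ are not conjugate in $G$, there is a homomorphism $\psi$ of $G$ onto a finite $p$-group $X$ such that $a\psi$ and $b\psi$ are not conjugate in $X$. A subset $M$ of a group $Y$ is $p$-separable in $Y$ if for every $y\in Y\setminus M$ there is a homomorphism $\psi$ of $Y$ onto a finite $p$-group $X$ with $y\psi\notin M\psi$. Subgroups $R\leqslant H$, $S\leqslant K$ with $(A\cap R)\varphi=B\cap S$ are called $(A,B,\varphi)$-compatible. *)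

(* Defs.v *)
From HB Require Import structures.
From mathcomp Require Import all_boot all_fingroup all_solvable.
Set Implicit Arguments. Unset Strict Implicit. Unset Printing Implicit Defensive.

Local Open Scope group_scope.

(* Possibly infinite groups are MathComp [groupType]s (boot/monoid.v);
   subsets of such a group are Prop-valued predicates [G -> Prop]. *)

Section Defs.
Variable G : groupType.

Definition is_subgroup (A : G -> Prop) : Prop :=
  [/\ A 1, (forall x y, A x -> A y -> A (x * y)) & (forall x, A x -> A x^-1)].

Definition is_normal_subgroup (A : G -> Prop) : Prop :=
  is_subgroup A /\ forall x g, A x -> A (x ^ g).

Definition is_central_subgroup (A : G -> Prop) : Prop :=
  is_subgroup A /\ forall a g, A a -> a * g = g * a.

(* C has finite p-power index in A (for C <= A): there are p^k elements r_i
   of A such that every x in A lies in exactly one right coset C r_i. *)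
Definition has_pindex_in (p : nat) (A C : G -> Prop) : Prop :=
  exists k : nat, exists r : 'I_(p ^ k) -> G,
    (forall i, A (r i)) /\ (forall x, A x -> exists! i, C (x * (r i)^-1)).

Definition onto_finite_pgroup (p : nat) (gT : finGroupType) (psi : G -> gT) : Prop :=
  [/\ (forall x y, psi (x * y) = psi x * psi y),
      (forall z : gT, exists x, psi x = z)
    & p.-group [set: gT]].

Definition conjugate (a b : G) : Prop := exists g : G, a ^ g = b.

Definition conj_p_separable (p : nat) : Prop :=
  forall a b : G, ~ conjugate a b ->
    exists (gT : finGroupType) (psi : G -> gT),
      onto_finite_pgroup p psi /\ ~ (exists z : gT, psi a ^ z = psi b).

Definition p_separable_in (p : nat) (M : G -> Prop) : Prop :=
  forall y : G, ~ M y ->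
    exists (gT : finGroupType) (psi : G -> gT),
      onto_finite_pgroup p psi /\ ~ (exists m, M m /\ psi m = psi y).

End Defs.

Definition is_iso_on (G G' : groupType) (A : G -> Prop) (B : G' -> Prop)
    (phi : G -> G') : Prop :=
  [/\ (forall x y, A x -> A y -> phi (x * y) = phi x * phi y),
      (forall x, A x -> B (phi x)),
      (forall x y, A x -> A y -> phi x = phi y -> x = y)
    & (forall y, B y -> exists x, A x /\ phi x = y)].

(* Main.v *)
Require Import Defs.
From mathcomp Require Import all_boot all_fingroup all_solvable.
From Stdlib Require Import ClassicalEpsilon.
Set Implicit Arguments. Unset Strict Implicit. Unset Printing Implicit Defensive.
Local Open Scope group_scope.

Definition asb (P : Prop) : bool :=
  if excluded_middle_informative P then true else false.
Lemma asbP (P : Prop) : reflect P (asb P).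
Proof. by rewrite /asb; case: excluded_middle_informative => h; constructor. Qed.

Section Basic.
Variable G : groupType.

Definition hom_on (gT : finGroupType) (D : G -> Prop) (f : G -> gT) :=
  forall x y, D x -> D y -> f (x * y) = f x * f y.

Definition img (gT : finGroupType) (D : G -> Prop) (f : G -> gT) : {set gT} :=
  [set z | asb (exists x, D x /\ f x = z)].

Lemma imgP (gT : finGroupType) (D : G -> Prop) (f : G -> gT) z :
  reflect (exists x, D x /\ f x = z) (z \in img D f).
Proof. by rewrite inE; apply: asbP. Qed.

Lemma hom_on1 (gT : finGroupType) (D : G -> Prop) (f : G -> gT) :
  is_subgroup D -> hom_on D f -> f 1 = 1.
Proof.
case=> D1 _ _ hf; apply: (@mulIg _ (f 1)); by rewrite -hf // mulg1 mul1g.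
Qed.

Lemma hom_onV (gT : finGroupType) (D : G -> Prop) (f : G -> gT) x :
  is_subgroup D -> hom_on D f -> D x -> f x^-1 = (f x)^-1.
Proof.
move=> sD hf Dx; have [_ _ DV] := sD.
apply: esym; apply: mulg1_eq; rewrite -hf ?mulgV; [exact: hom_on1 sD hf|done|exact: DV].
Qed.

Lemma img_group (gT : finGroupType) (D : G -> Prop) (f : G -> gT) :
  is_subgroup D -> hom_on D f -> group_set (img D f).
Proof.
move=> sD hf; have [D1 DM DV] := sD.
apply/group_setP; split.
  by apply/imgP; exists 1; split => //; apply: hom_on1 sD hf.
move=> z1 z2 /imgP [x1 [Dx1 <-]] /imgP [x2 [Dx2 <-]].
by apply/imgP; exists (x1 * x2); split; [apply: DM|apply: hf].
Qed.

Definition pre (gT : finGroupType) (D : G -> Prop) (f : G -> gT) (z : gT) : G :=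
  match excluded_middle_informative (exists x, D x /\ f x = z) with
  | left h => proj1_sig (constructive_indefinite_description _ h)
  | right _ => 1 end.

Lemma preP (gT : finGroupType) (D : G -> Prop) (f : G -> gT) z :
  z \in img D f -> D (pre D f z) /\ f (pre D f z) = z.
Proof.
move/imgP=> h; rewrite /pre; case: excluded_middle_informative => // h'.
exact: proj2_sig (constructive_indefinite_description _ h').
Qed.

Lemma preim_pindex (p : nat) (D : G -> Prop) (gT : finGroupType) (f : G -> gT)
    (Q : {group gT}) :
  is_subgroup D -> hom_on D f -> p.-group (img D f) ->
  has_pindex_in p D (fun x => D x /\ f x \in Q).
Proof.
move=> sD hf pI; have [D1 DM DV] := sD.
set I := Group (img_group sD hf).
set J := (I :&: Q)%G.
have : p.-nat #|rcosets J I|.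
  apply: pnat_dvd (dvdn_indexg I J) _; by rewrite -pgroupE.
case/p_natP=> k e; exists k; rewrite -e.
pose X (i : 'I_#|rcosets J I|) := enum_val i.
have XP i : exists2 y, y \in I & X i = J :* y.
  by apply/rcosetsP; exact: enum_valP.
have reprX i : repr (X i) \in I /\ J :* repr (X i) = X i.
  have [y yI ->] := XP i.
  rewrite rcoset_repr; split => //.
  have := mem_repr_rcoset J y; rewrite mem_rcoset => h.
  have -> : repr (J :* y) = (repr (J :* y) * y^-1) * y by rewrite mulgVK.
  by rewrite groupM //; have := h; rewrite inE => /andP [].
exists (fun i => pre D f (repr (X i))); split.
  by move=> i; have [h _] := reprX i; case: (preP h).
move=> x Dx.
have zI : f x \in I by apply/imgP; exists x.
have cJ : J :* f x \in rcosets J I by apply/rcosetsP; exists (f x).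
have key j : (D (x * (pre D f (repr (X j)))^-1) /\
   f (x * (pre D f (repr (X j)))^-1) \in Q) <-> X j = J :* f x.
  have [rI rX] := reprX j; have [Dr fr] := preP rI.
  have -> : f (x * (pre D f (repr (X j)))^-1) = f x * (repr (X j))^-1.
    rewrite hf //; last exact: DV.
    by rewrite (hom_onV sD hf Dr) fr.
  split.
    case=> _ hQ; rewrite -rX; apply/esym/rcoset_eqP; rewrite mem_rcoset.
    by rewrite inE hQ groupM ?groupV.
  move=> hX; split; first by apply: DM => //; apply: DV.
  have : f x \in J :* repr (X j) by rewrite rX hX rcoset_refl.
  by rewrite mem_rcoset inE => /andP [].
exists (enum_rank_in cJ (J :* f x)); split.
  by apply/key; rewrite /X enum_rankK_in.
move=> j /key hj; apply: enum_val_inj; rewrite /X -/(X j) hj.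
by rewrite enum_rankK_in.
Qed.

End Basic.

Lemma exu_ex (A : Type) (P : A -> Prop) : (exists! x, P x) -> exists x, P x.
Proof. by case=> x [h _]; exists x. Qed.

Section Theta.
Variable G : groupType.
Implicit Types (x y : G).

Lemma sub_div (M : G -> Prop) a b c : is_subgroup M ->
  M (a * c^-1) -> M (b * c^-1) -> M (a * b^-1).
Proof.
case=> _ MM MV h1 h2.
have -> : a * b^-1 = (a * c^-1) * (b * c^-1)^-1 by rewrite invMg invgK mulgA mulgVK.
by apply: MM => //; apply: MV.
Qed.

Lemma sub_comp (M : G -> Prop) a b c : is_subgroup M ->
  M (a * c^-1) -> M (c * b^-1) -> M (a * b^-1).
Proof.
case=> _ MM MV h1 h2.
have -> : a * b^-1 = (a * c^-1) * (c * b^-1) by rewrite !mulgA mulgVK.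
by apply: MM.
Qed.

Lemma True_sub : is_subgroup (fun _ : G => True).
Proof. by []. Qed.

Lemma theta_exists (p : nat) (M : G -> Prop) : prime p ->
  is_normal_subgroup M -> has_pindex_in p (fun _ => True) M ->
  exists (gT : finGroupType) (th : G -> gT),
    [/\ hom_on (fun _ => True) th, p.-group (img (fun _ => True) th)
      & forall x, th x = 1 <-> M x].
Proof.
move=> pp [sM Mc] [k [r [_ hr]]].
have [M1 MM MV] := sM.
pose idx x := proj1_sig (constructive_indefinite_description _
                 (exu_ex (hr x I))).
have idxP x : M (x * (r (idx x))^-1).
  exact: proj2_sig (constructive_indefinite_description _ (exu_ex (hr x I))).
have idxU x i : M (x * (r i)^-1) -> i = idx x.
  move=> h; have [i0 [_ u]] := hr x I.
  by rewrite -(u _ h) -(u _ (idxP x)).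
have sig_inj x : injective (fun i => idx (r i * x)).
  move=> i j e.
  have h : M (r i * (r j)^-1).
    have h1 := idxP (r i * x); have h2 := idxP (r j * x).
    rewrite e in h1.
    have := sub_div sM h1 h2.
    by rewrite invMg mulgA mulgK.
  rewrite (idxU _ _ h); apply: idxU; by rewrite mulgV.
pose th x := perm (sig_inj x).
have thE x i : th x i = idx (r i * x) by rewrite /th permE.
have hom : hom_on (fun _ => True) th.
  move=> x y _ _; apply/permP => i; rewrite permM !thE.
  symmetry; apply: idxU.
  apply: (sub_comp sM (c := r (idx (r i * x)) * y)).
    have := idxP (r i * x); set l := idx _ => h.
    have -> : r i * (x * y) * (r l * y)^-1 = r i * x * (r l)^-1.
      by rewrite invMg !mulgA mulgK.
    done.
  exact: idxP.
set i0 := idx 1.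
have Mr0 : M (r i0).
  have := idxP 1; rewrite mul1g => /MV; by rewrite invgK.
have fix0 y : th y i0 = i0 -> M y.
  rewrite thE => e.
  have := idxP (r i0 * y); rewrite e => h.
  have -> : y = (r i0)^-1 * (r i0 * y * (r i0)^-1) * r i0.
    by rewrite !mulgA mulVg mul1g mulgVK.
  exact: (MM _ _ (MM _ _ (MV _ Mr0) h) Mr0).
have ker x : th x = 1 <-> M x.
  split; first by move=> e; apply: fix0; rewrite e perm1.
  move=> Mx; apply/permP => i; rewrite thE perm1; symmetry; apply: idxU.
  have := Mc _ (r i)^-1 Mx; by rewrite conjgE invgK mulgA.
exists _, th; split => //.
have thr j : th (r j) i0 = j.
  rewrite thE; symmetry; apply: idxU; by rewrite mulgK.
have rinj : injective (fun j => th (r j)).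
  by move=> i j e; rewrite -(thr i) -(thr j) e.
have -> : img (fun _ => True) th = [set th (r j) | j : 'I_(p ^ k)].
  apply/setP => z; apply/imgP/imsetP.
    case=> x [_ <-]; exists (th x i0) => //.
    set j := th x i0.
    apply: divg1_eq.
    rewrite -(hom_onV True_sub hom) // -hom //; apply/ker; apply: fix0.
    rewrite hom // (hom_onV True_sub hom) // permM.
    by rewrite -/j; have := permK (th (r j)) i0; rewrite thr.
  by case=> j _ ->; exists (r j).
by rewrite pgroupE card_imset // card_ord pnatX pnat_id.
Qed.

End Theta.

Section Side.
Variable G : groupType.
Implicit Types (x y : G).

Lemma pair_pg (p : nat) (D : G -> Prop) (gT1 gT2 : finGroupType)
    (f1 : G -> gT1) (f2 : G -> gT2) (P1 : {group gT1}) (P2 : {group gT2}) :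
  is_subgroup D -> hom_on D f1 -> hom_on D f2 ->
  (forall x, D x -> f1 x \in P1) -> (forall x, D x -> f2 x \in P2) ->
  p.-group P1 -> p.-group P2 ->
  hom_on D (fun x => (f1 x, f2 x)) /\ p.-group (img D (fun x => (f1 x, f2 x))).
Proof.
move=> sD h1 h2 i1 i2 p1 p2.
have hp : hom_on D (fun x => (f1 x, f2 x)).
  by move=> x y Dx Dy; rewrite h1 // h2.
split => //.
have sub : Group (img_group sD hp) \subset setX_group P1 P2.
  apply/subsetP => z /imgP [x [Dx <-]]; apply/setXP; split; [exact: i1|exact: i2].
apply: pgroupS sub _.
by rewrite pgroupE /= cardsX pnatM -!pgroupE p1 p2.
Qed.

Lemma pindex_ext (p : nat) (A C C' : G -> Prop) :
  (forall x, C x <-> C' x) -> has_pindex_in p A C -> has_pindex_in p A C'.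
Proof.
move=> e [k [r [rA hr]]]; exists k, r; split => // x Ax.
have [i [hi u]] := hr x Ax; exists i; split; first by apply/e.
by move=> j /e; apply: u.
Qed.

Lemma side (p : nat) (A C M : G -> Prop) : prime p ->
  is_central_subgroup A -> is_normal_subgroup M ->
  has_pindex_in p (fun _ => True) M ->
  is_subgroup C -> (forall x, C x -> A x) -> (forall x, C x -> M x) ->
  has_pindex_in p A C -> p_separable_in p C ->
  exists R : G -> Prop,
    [/\ is_normal_subgroup R /\ has_pindex_in p (fun _ => True) R,
        forall x, R x -> M x & forall x, A x /\ R x <-> C x].
Proof.
move=> pp [sA cA] nM iM sC CA CM iC sepC.
have [C1 CMul CV] := sC.
have [gT0 [th [hth pth kth]]] := theta_exists pp nM iM.
have [k [r [rA hr]]] := iC.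
pose sep (gT : finGroupType) (F : G -> gT) (i : 'I_(p ^ k)) :=
  ~ (exists c, C c /\ F c = F (r i)).
have ind m : exists (gT : finGroupType) (F : G -> gT),
    [/\ hom_on (fun _ => True) F, p.-group (img (fun _ => True) F)
      & forall i : 'I_(p ^ k), i < m -> ~ C (r i) -> sep gT F i].
  elim: m => [|m [gT [F [hF pF sF]]]]; first by exists gT0, th; split.
  case: (excluded_middle_informative (exists i : 'I_(p ^ k), val i = m /\ ~ C (r i))).
    case=> im [em nCm].
    have [gT' [psi [[hpsi onto pT'] nsep]]] := sepC _ nCm.
    have [hP pP] := pair_pg (P1 := Group (img_group (@True_sub G) hF))
                            (P2 := [set: gT']%G) (@True_sub G) hF
                            (fun x y _ _ => hpsi x y)
                            (fun x _ => (introT (imgP _ _ _) (ex_intro _ x (conj I erefl))))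
                            (fun x _ => in_setT _) pF pT'.
    exists _, (fun x => (F x, psi x)); split => // i.
    rewrite ltnS leq_eqVlt => /orP [/eqP ei|lti] nCi [c [Cc e]].
      have eii : i = im by apply: val_inj; rewrite /= ei em.
      subst i; apply: nsep; exists c; split => //.
      by have := congr1 snd e.
    apply: (sF i lti nCi); exists c; split => //.
    by have := congr1 fst e.
  move=> nex; exists gT, F; split => // i.
  rewrite ltnS leq_eqVlt => /orP [/eqP ei|lti] nCi; last exact: sF.
  by case: nex; exists i.
have [gT [F [hF pF sF]]] := ind (p ^ k)%N.
have hFC : hom_on C F by move=> x y _ _; apply: hF.
pose FC := Group (img_group sC hFC).
pose R x := th x = 1 /\ F x \in img C F.
exists R.
have hFV x : F x^-1 = (F x)^-1 by apply: (hom_onV (@True_sub G) hF).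
have hthV x : th x^-1 = (th x)^-1 by apply: (hom_onV (@True_sub G) hth).
have F1 : F 1 = 1 by apply: (hom_on1 (@True_sub G) hF).
have th1 : th 1 = 1 by apply: (hom_on1 (@True_sub G) hth).
split.
- split.
    split; first split.
    + split => //; apply/imgP; exists 1; split => //.
    + move=> x y [tx /imgP [c [Cc ec]]] [ty /imgP [d [Cd ed]]]; split.
        by rewrite hth // tx ty mulg1.
      by apply/imgP; exists (c * d); split; [apply: CMul | rewrite hF // hF // ec ed].
    + move=> x [tx /imgP [c [Cc ec]]]; split; first by rewrite hthV tx invg1.
      by apply/imgP; exists c^-1; split; [apply: CV | rewrite hFV ec hFV].
    move=> x g [tx /imgP [c [Cc ec]]]; split.
      by apply/kth; have [_ Mc] := nM; apply: Mc; apply/kth.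
    apply/imgP; exists c; split => //.
    rewrite conjgE !hF // hFV -ec -hFV -!hF // (cA _ _ (CA _ Cc)) mulKg.
    done.
  apply: (pindex_ext (C := fun x => True /\ (th x, F x) \in setX_group 1%G FC)).
    move=> x; rewrite /R; split.
      by case=> _ /setXP [/set1P -> ->].
    by case=> -> h; split => //; apply/setXP; split; first exact: group1.
  have [hP pP] := pair_pg (P1 := Group (img_group (@True_sub G) hth))
     (P2 := Group (img_group (@True_sub G) hF)) (@True_sub G) hth hF
     (fun x _ => introT (imgP _ _ _) (ex_intro _ x (conj I erefl)))
     (fun x _ => introT (imgP _ _ _) (ex_intro _ x (conj I erefl))) pth pF.
  exact: (@preim_pindex G p _ _ _ (setX_group 1%G FC) (@True_sub G) hP pP).
- by move=> x [/kth].
move=> x; split.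
  case=> Ax [tx /imgP [c [Cc ec]]].
  have [i [hi _]] := hr x Ax.
  case: (excluded_middle_informative (C (r i))) => Cri.
    have -> : x = (x * (r i)^-1) * r i by rewrite mulgVK.
    exact: CMul.
  exfalso; apply: (sF i (ltn_ord i) Cri).
  exists ((x * (r i)^-1)^-1 * c); split; first by apply: CMul => //; apply: CV.
  by rewrite hF // hFV hF // hFV ec invMg invgK -mulgA mulVg mulg1.
move=> Cx; split; first exact: CA.
split; first by apply/kth; apply: CM.
by apply/imgP; exists x.
Qed.

End Side.

Section Iso.
Variables (H K : groupType) (A : H -> Prop) (B : K -> Prop) (phi : H -> K).
Hypothesis sA : is_subgroup A.
Hypothesis iso : is_iso_on A B phi.

Lemma phi1 : phi 1 = 1.
Proof.
have [hM _ _ _] := iso; have [A1 _ _] := sA.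
apply: (@mulIg _ (phi 1)); by rewrite -hM // mulg1 mul1g.
Qed.

Lemma phiV x : A x -> phi x^-1 = (phi x)^-1.
Proof.
move=> Ax; have [hM _ _ _] := iso; have [A1 _ AV] := sA.
apply: esym; apply: mulg1_eq; rewrite -hM ?mulgV; [exact: phi1|done|exact: AV].
Qed.

End Iso.

Theorem proposition3p2 (p : nat) (H K : groupType)
    (A : H -> Prop) (B : K -> Prop) (phi : H -> K) :
  prime p ->
  conj_p_separable H p -> conj_p_separable K p ->
  is_central_subgroup A -> is_central_subgroup B ->
  is_iso_on A B phi ->
  p_separable_in p A -> p_separable_in p B ->
  (forall C : H -> Prop, is_subgroup C -> (forall x, C x -> A x) ->
     has_pindex_in p A C -> p_separable_in p C) ->
  (forall D : K -> Prop, is_subgroup D -> (forall x, D x -> B x) ->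
     has_pindex_in p B D -> p_separable_in p D) ->
  forall (M : H -> Prop) (N : K -> Prop),
    is_normal_subgroup M -> has_pindex_in p (fun _ => True) M ->
    is_normal_subgroup N -> has_pindex_in p (fun _ => True) N ->
    exists (R : H -> Prop) (S : K -> Prop),
      [/\ is_normal_subgroup R /\ has_pindex_in p (fun _ => True) R,
          is_normal_subgroup S /\ has_pindex_in p (fun _ => True) S,
          (forall x, R x -> M x), (forall y, S y -> N y)
        & (forall y, (B y /\ S y) <-> (exists x, [/\ A x, R x & phi x = y]))].
Proof.
move=> pp _ _ cA cB iso _ _ sepA sepB M N nM iM nN iN.
have [sA _] := cA; have [sB _] := cB.
have [A1 AM AV] := sA; have [B1 BM BV] := sB.
have [nsM _] := nM; have [M1 MM MV] := nsM.
have [nsN _] := nN; have [N1 NM NV] := nsN.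
have [phM phB phI phS] := iso.
have ph1 := phi1 sA iso; have phV := phiV sA iso.
have [gM [thM [hthM pthM kthM]]] := theta_exists pp nM iM.
have [gN [thN [hthN pthN kthN]]] := theta_exists pp nN iN.
pose C x := [/\ A x, M x & N (phi x)].
have sC : is_subgroup C.
  split.
  - by split => //; rewrite ph1.
  - move=> x y [Ax Mx Nx] [Ay My Ny]; split; [exact: AM|exact: MM|].
    by rewrite phM //; apply: NM.
  - move=> x [Ax Mx Nx]; split; [exact: AV|exact: MV|].
    by rewrite phV //; apply: NV.
have CA x : C x -> A x by case.
have iC : has_pindex_in p A C.
  have hN : hom_on A (fun x => thN (phi x)).
    by move=> x y Ax Ay; rewrite phM // hthN.
  have hMA : hom_on A thM by move=> x y _ _; apply: hthM.
  have [hP pP] := pair_pg (P1 := Group (img_group (@True_sub H) hthM))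
     (P2 := Group (img_group (@True_sub K) hthN)) sA hMA hN
     (fun x _ => introT (imgP _ _ _) (ex_intro _ x (conj I erefl)))
     (fun x _ => introT (imgP _ _ _) (ex_intro _ (phi x) (conj I erefl))) pthM pthN.
  apply: (pindex_ext (C := fun x => A x /\ (thM x, thN (phi x)) \in setX_group 1%G 1%G)).
    move=> x; split.
      case=> Ax /setXP [/set1P /kthM Mx /set1P /kthN Nx]; by split.
    case=> Ax Mx Nx; split => //; apply/setXP; split; apply/set1P.
      by apply/kthM.
    by apply/kthN.
  exact: (@preim_pindex H p _ _ _ (setX_group 1%G 1%G) sA hP pP).
have [R [[nR iR] RM RC]] := side pp cA nM iM sC CA (fun x Cx => let: And3 _ h _ := Cx in h)
   iC (sepA _ sC CA iC).
pose D y := B y /\ exists x, C x /\ phi x = y.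
have sD : is_subgroup D.
  split.
  - by split => //; exists 1; split => //; have [] := sC.
  - move=> x y [Bx [a [Ca ea]]] [By [b [Cb eb]]]; split; first exact: BM.
    exists (a * b); split; first by have [_ h _] := sC; apply: h.
    by rewrite phM ?ea ?eb //; [exact: CA|exact: CA].
  - move=> x [Bx [a [Ca ea]]]; split; first exact: BV.
    exists a^-1; split; first by have [_ _ h] := sC; apply: h.
    by rewrite phV ?ea //; exact: CA.
have DB y : D y -> B y by case.
have DN y : D y -> N y by case=> _ [x [[_ _ Nx] <-]].
have iD : has_pindex_in p B D.
  have [k [r [rA hr]]] := iC.
  exists k, (fun i => phi (r i)); split; first by move=> i; apply: phB.
  move=> y By; have [x [Ax ex]] := phS _ By.
  have [i [hi u]] := hr x Ax.
  exists i; split.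
    split; first by apply: BM => //; apply: BV; apply: phB.
    exists (x * (r i)^-1); split => //.
    have ArV : A (r i)^-1 by apply: AV.
    by rewrite (phM _ _ Ax ArV) (phV _ (rA i)) ex.
  move=> j [_ [x' [Cx' e]]]; apply: u.
  suff -> : x * (r j)^-1 = x' by [].
  have ArV : A (r j)^-1 by apply: AV.
  apply: phI.
  - exact: AM.
  - exact: CA.
  - by rewrite e (phM _ _ Ax ArV) (phV _ (rA j)) ex.
have [S [[nS iS] SN SD]] := side pp cB nN iN sD DB DN iD (sepB _ sD DB iD).
exists R, S; split => //.
move=> y; rewrite SD; split.
  case=> _ [x [Cx <-]]; exists x; have [Ax Rx] := (RC x).2 Cx; by split.
case=> x [Ax Rx <-]; have Cx := (RC x).1 (conj Ax Rx).
split; [exact: phB | by exists x].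
Qed.
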